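(* Let $\mathbf{x}$ be a feasible solution of $\textsc{Dir-MC-Rel}$ and let $\theta$ be uniform on $(0,1)$. Then $\mathbb{E}\big[\sum_{e\in C(\theta)}w_e\big]\le 2\sum_{e\in E}w_e x_e$.
   Context: $G=(V,E)$ is a directed graph with non-negative edge weights $w_e$ and distinct terminals $s_1,\dots,s_k$, $k\ge2$. For $i\neq j$, $\mathcal{P}_{ij}$ is the set of directed paths from $s_i$ to $s_j$ in $G$. $\textsc{Dir-MC-Rel}$: minimize $\sum_e w_e x_e$ s.t. $\sum_{e\in p}x_e\ge1$ for all $p\in\mathcal{P}_{ij}$, $i\ne j$, and $x\ge0$. Given feasible $\mathbf{x}$, form $G^+$ by adding new vertices $t_1,\dots,t_k$ and new edges $(t_i,s_j)$ for all $i\neq j$, each with $x$-value $0$. For vertices $u,v$ of $G^+$, $d(u,v)$ is the length of a shortest directed path from $u$ to $v$ in $G^+$ with edge lengths $\mathbf{x}$ ($+\infty$ if none). $B(v,r)=\{u: d(v,u)\le r\}$. For a vertex set $A$, $\delta^+(A)$ is the set of edges of $G^+$ with tail in $A$ and head not in $A$. For $\theta\in(0,1)$, $C(\theta)=\bigcup_{i=1}^k\delta^+(B(t_i,\theta))$. *)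

(* Defs.v *)
(* classical reals, Riemann integral for the expectation. *)
From Stdlib Require Import Reals List Arith ClassicalEpsilon.
Import ListNotations.
Open Scope R_scope.

Fixpoint walk {V Ed : Type} (ok : Ed -> Prop) (tl hd : Ed -> V)
    (u : V) (p : list Ed) (v : V) : Prop :=
  match p with
  | nil => u = v
  | e :: p' => ok e /\ tl e = u /\ walk ok tl hd (hd e) p' v
  end.

Definition is_path {V Ed : Type} (ok : Ed -> Prop) (tl hd : Ed -> V)
    (u : V) (p : list Ed) (v : V) : Prop :=
  walk ok tl hd u p v /\ NoDup (u :: map hd p).

Definition path_len {Ed : Type} (len : Ed -> R) (p : list Ed) : R :=
  fold_right (fun e acc => len e + acc) 0 p.

(** The input graph G: vertices 0..nV-1, edges indexed 0..m-1 where
    m = length E, edge e goes from fst (nth e E) to snd (nth e E). *)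
Definition etail (E : list (nat * nat)) (e : nat) : nat := fst (nth e E (0%nat, 0%nat)).
Definition ehead (E : list (nat * nat)) (e : nat) : nat := snd (nth e E (0%nat, 0%nat)).
Definition eok (E : list (nat * nat)) (e : nat) : Prop := (e < length E)%nat.

Definition feasible (E : list (nat * nat)) (k : nat) (s : nat -> nat) (x : nat -> R) : Prop :=
  (forall e, (e < length E)%nat -> 0 <= x e) /\
  (forall i j p, (i < k)%nat -> (j < k)%nat -> i <> j ->
     is_path (eok E) (etail E) (ehead E) (s i) p (s j) ->
     1 <= path_len x p).

(** The graph G^+: vertices [inl v] (v of G) and [inr i] (= t_i);
    edges [inl e] (edge e of G) and [inr (i,j)] (= (t_i, s_j), i <> j). *)
Definition plus_ok (E : list (nat * nat)) (k : nat) (f : nat + (nat * nat)) : Prop :=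
  match f with
  | inl e => (e < length E)%nat
  | inr (i, j) => (i < k)%nat /\ (j < k)%nat /\ i <> j
  end.
Definition plus_tl (E : list (nat * nat)) (f : nat + (nat * nat)) : nat + nat :=
  match f with inl e => inl (etail E e) | inr (i, _) => inr i end.
Definition plus_hd (E : list (nat * nat)) (s : nat -> nat) (f : nat + (nat * nat)) : nat + nat :=
  match f with inl e => inl (ehead E e) | inr (_, j) => inl (s j) end.
Definition plus_len (x : nat -> R) (f : nat + (nat * nat)) : R :=
  match f with inl e => x e | inr _ => 0 end.

(* u ∈ B(v, r) in G^+, i.e. d(v,u) <= r: the shortest-path length is a
   minimum over the finitely many directed paths, so d(v,u) <= r iff some
   directed path from v to u has length <= r (d = +oo if there is none). *)
Definition in_ball E k s x (v : nat + nat) (r : R) (u : nat + nat) : Prop :=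
  exists p, is_path (plus_ok E k) (plus_tl E) (plus_hd E s) v p u /\
            path_len (plus_len x) p <= r.

Definition in_delta_out E k s (A : nat + nat -> Prop) (f : nat + (nat * nat)) : Prop :=
  plus_ok E k f /\ A (plus_tl E f) /\ ~ A (plus_hd E s f).

Definition in_cut E k s x (theta : R) (f : nat + (nat * nat)) : Prop :=
  exists i, (i < k)%nat /\ in_delta_out E k s (in_ball E k s x (inr i) theta) f.

Definition pdec (P : Prop) : bool :=
  if excluded_middle_informative P then true else false.

Definition cut_weight E k s (w x : nat -> R) (theta : R) : R :=
  fold_right Rplus 0
    (map (fun e => if pdec (in_cut E k s x theta (inl e)) then w e else 0)
         (seq 0 (length E))).

Definition lp_value (E : list (nat * nat)) (w x : nat -> R) : R :=
  fold_right Rplus 0 (map (fun e => w e * x e) (seq 0 (length E))).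

(* Main.v *)
Require Import Defs.
From Stdlib Require Import Reals List Arith Lra Lia Classical ClassicalEpsilon.
Import ListNotations.
Open Scope R_scope.

Lemma step_const (f : R -> R) (a b : R) : a <= b ->
  (forall t1 t2, a < t1 -> t1 <= t2 -> t2 < b -> f t1 = f t2) -> IsStepFun f a b.
Proof.
  intros Hab H. exists [a; b]. exists [f ((a+b)/2)].
  unfold adapted_couple. split; [|split; [|split; [|split]]].
  - intros i Hi. simpl in Hi. destruct i; [simpl; lra| lia].
  - simpl. unfold Rmin. destruct (Rle_dec a b); lra.
  - simpl. unfold Rmax. destruct (Rle_dec a b); lra.
  - reflexivity.
  - intros i Hi. simpl in Hi. destruct i; [|lia]. simpl.
    intros t [Ht1 Ht2].
    destruct (Rle_dec t ((a+b)/2)).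
    + apply H; lra.
    + symmetry; apply H; lra.
Qed.

Definition respects (f : R -> R) (L : list R) (a b : R) : Prop :=
  forall t1 t2, a < t1 -> t1 <= t2 -> t2 < b ->
    (forall c, In c L -> ~ (t1 <= c <= t2)) -> f t1 = f t2.

Lemma step_gen (f : R -> R) (L : list R) : forall a b, a <= b -> respects f L a b -> IsStepFun f a b.
Proof.
  induction L as [|c L IH]; intros a b Hab H.
  - apply step_const; auto; intros; try (apply H; auto; intros c []).
  - destruct (Rlt_dec a c) as [Hac|Hac]; [destruct (Rlt_dec c b) as [Hcb|Hcb]|].
    + apply StepFun_P46 with c.
      * apply IH; [lra|]. intros t1 t2 H1 H2 H3 H4. apply H; try lra.
        intros c' [<-|Hc']; [lra| apply H4; auto].
      * apply IH; [lra|]. intros t1 t2 H1 H2 H3 H4. apply H; try lra.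
        intros c' [<-|Hc']; [lra| apply H4; auto].
    + apply IH; auto. intros t1 t2 H1 H2 H3 H4. apply H; try lra.
      intros c' [<-|Hc']; [lra| apply H4; auto].
    + apply IH; auto. intros t1 t2 H1 H2 H3 H4. apply H; try lra.
      intros c' [<-|Hc']; [lra| apply H4; auto].
Qed.

Lemma step_int (f : R -> R) (a b : R) : IsStepFun f a b -> Riemann_integrable f a b.
Proof.
  intros H eps. exists (mkStepFun H). exists (mkStepFun (StepFun_P4 a b 0)).
  split.
  - intros t _. simpl. unfold fct_cte. rewrite Rminus_diag, Rabs_R0. lra.
  - rewrite StepFun_P18. rewrite Rmult_0_l, Rabs_R0. apply cond_pos.
Qed.

Definition Breaks (Q : R -> Prop) (L : list R) : Prop :=
  forall t1 t2, t1 <= t2 -> (forall c, In c L -> ~ (t1 <= c <= t2)) -> (Q t1 <-> Q t2).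

Lemma Breaks_incl Q L L' : Breaks Q L -> incl L L' -> Breaks Q L'.
Proof. intros H Hi t1 t2 H1 H2. apply H; auto; intros c Hc; apply H2; apply Hi; auto. Qed.

Lemma Breaks_ext (Q Q' : R -> Prop) L : (forall t, Q t <-> Q' t) -> Breaks Q L -> Breaks Q' L.
Proof. intros He H t1 t2 H1 H2. rewrite <- !He. apply H; auto. Qed.

Lemma Breaks_and P Q L1 L2 : Breaks P L1 -> Breaks Q L2 -> Breaks (fun t => P t /\ Q t) (L1 ++ L2).
Proof.
  intros H1 H2. intros t1 t2 Ht Hc.
  assert (A := Breaks_incl P L1 (L1++L2) H1 (incl_appl _ (incl_refl _)) t1 t2 Ht Hc).
  assert (B := Breaks_incl Q L2 (L1++L2) H2 (incl_appr _ (incl_refl _)) t1 t2 Ht Hc).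
  tauto.
Qed.

Lemma Breaks_or P Q L1 L2 : Breaks P L1 -> Breaks Q L2 -> Breaks (fun t => P t \/ Q t) (L1 ++ L2).
Proof.
  intros H1 H2. intros t1 t2 Ht Hc.
  assert (A := Breaks_incl P L1 (L1++L2) H1 (incl_appl _ (incl_refl _)) t1 t2 Ht Hc).
  assert (B := Breaks_incl Q L2 (L1++L2) H2 (incl_appr _ (incl_refl _)) t1 t2 Ht Hc).
  tauto.
Qed.

Lemma Breaks_not P L : Breaks P L -> Breaks (fun t => ~ P t) L.
Proof. intros H t1 t2 Ht Hc. assert (A := H t1 t2 Ht Hc). tauto. Qed.

Lemma Breaks_const (P : Prop) : Breaks (fun _ => P) nil.
Proof. intros t1 t2 _ _. tauto. Qed.

Lemma Breaks_shift Q L y : Breaks Q L -> Breaks (fun t => Q (t - y)) (map (fun c => c + y) L).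
Proof.
  intros H t1 t2 Ht Hc. apply H; [lra|]. intros c Hin Hcc.
  apply (Hc (c + y)); [apply (in_map (fun c0 => c0 + y)); auto| lra].
Qed.

Lemma Breaks_exists (Q : nat -> R -> Prop) : forall n,
  (forall j, (j < n)%nat -> exists L, Breaks (Q j) L) ->
  exists L, Breaks (fun t => exists j, (j < n)%nat /\ Q j t) L.
Proof.
  induction n; intros H.
  - exists nil. apply Breaks_ext with (fun _ => False).
    + intro t. split; [tauto| intros [j [Hj _]]; lia].
    + apply Breaks_const.
  - destruct IHn as [L1 H1]. { intros j Hj; apply H; lia. }
    destruct (H n (Nat.lt_succ_diag_r n)) as [L2 H2].
    exists (L1 ++ L2). eapply Breaks_ext; [|apply (Breaks_or _ _ _ _ H1 H2)].
    intro t; simpl. split.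
    + intros [[j [Hj Hq]]|Hq]; [exists j; split; [lia|auto] | exists n; split; [lia|auto]].
    + intros [j [Hj Hq]]. destruct (Nat.eq_dec j n) as [->|Hne]; [right; auto|].
      left; exists j; split; [lia|auto].
Qed.

Lemma thr (Q : R -> Prop) : (forall t t', Q t -> t <= t' -> Q t') ->
  (forall t, ~ Q t) \/ (forall t, Q t) \/
  exists tau, (forall t, t < tau -> ~ Q t) /\ (forall t, tau < t -> Q t).
Proof.
  intros Hm.
  destruct (classic (exists t, Q t)) as [[t0 Ht0]|Hn]; [|left; intros t Ht; apply Hn; eauto].
  destruct (classic (exists t, ~ Q t)) as [[t1 Ht1]|Hn];
    [|right; left; intros t; apply NNPP; intro; apply Hn; eauto].
  right; right.
  assert (Hb : bound (fun t => ~ Q t)).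
  { exists t0. intros t Ht. destruct (Rle_dec t t0) as [|Hlt]; auto.
    exfalso; apply Ht; apply Hm with t0; auto; lra. }
  destruct (completeness _ Hb (ex_intro _ t1 Ht1)) as [m [Hub Hlub]].
  exists m. split.
  - intros t Ht HQ. assert (m <= t); [|lra]. apply Hlub. intros s Hs.
    destruct (Rle_dec s t) as [|Hlt]; auto. exfalso; apply Hs; apply Hm with t; auto; lra.
  - intros t Ht. apply NNPP; intro HQ. assert (t <= m) by (apply Hub; auto). lra.
Qed.

Lemma Breaks_mono (Q : R -> Prop) : (forall t t', Q t -> t <= t' -> Q t') -> exists L, Breaks Q L.
Proof.
  intros Hm. destruct (thr Q Hm) as [H|[H|[tau [H1 H2]]]].
  - exists nil. intros t1 t2 _ _. split; intro X; [apply H in X|apply H in X]; tauto.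
  - exists nil. intros t1 t2 _ _. split; intros; apply H.
  - exists [tau]. intros t1 t2 Ht Hc.
    assert (Hn : ~ (t1 <= tau <= t2)) by (apply Hc; left; auto).
    destruct (Rlt_dec t2 tau).
    + split; intro X; exfalso; [apply (H1 t1)|apply (H1 t2)]; auto; lra.
    + assert (tau < t1). { destruct (Rlt_dec tau t1); auto. exfalso; apply Hn; lra. }
      split; intros; apply H2; lra.
Qed.

Lemma Breaks_step (Q : R -> Prop) L v a b : Breaks Q L -> a <= b ->
  IsStepFun (fun t => if pdec (Q t) then v else 0) a b.
Proof.
  intros H Hab. apply step_gen with L; auto.
  intros t1 t2 _ Ht _ Hc. assert (A := H t1 t2 Ht Hc).
  unfold pdec. destruct (excluded_middle_informative (Q t1)), (excluded_middle_informative (Q t2)); tauto.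
Qed.

Lemma Breaks_int (Q : R -> Prop) L v a b : Breaks Q L -> a <= b ->
  Riemann_integrable (fun t => if pdec (Q t) then v else 0) a b.
Proof. intros; apply step_int; eapply Breaks_step; eauto. Qed.

Definition ind (c d : R) (t : R) : R := if pdec (c <= t /\ t <= d) then 1 else 0.

Lemma ind_breaks c d : Breaks (fun t => c <= t /\ t <= d) [c; d].
Proof.
  intros t1 t2 Ht Hc.
  assert (A : ~ (t1 <= c <= t2)) by (apply Hc; simpl; auto).
  assert (B : ~ (t1 <= d <= t2)) by (apply Hc; simpl; auto).
  split; intros [H1 H2].
  - split; [lra|]. destruct (Rle_dec t2 d); auto. exfalso; apply B; lra.
  - split; [|lra]. destruct (Rle_dec c t1); auto. exfalso; apply A; lra.
Qed.

Lemma ind_int c d a b : a <= b -> Riemann_integrable (ind c d) a b.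
Proof. intros; eapply Breaks_int; [apply ind_breaks| auto]. Qed.

Lemma pdec_true (P : Prop) : P -> pdec P = true.
Proof. unfold pdec; destruct (excluded_middle_informative P); tauto. Qed.
Lemma pdec_false (P : Prop) : ~ P -> pdec P = false.
Proof. unfold pdec; destruct (excluded_middle_informative P); tauto. Qed.

Lemma int_le_cte f a b c (pr : Riemann_integrable f a b) : a <= b ->
  (forall t, a < t < b -> f t <= c) -> RiemannInt pr <= c * (b - a).
Proof.
  intros Hab H. rewrite <- (RiemannInt_P15 (RiemannInt_P14 a b c)).
  apply RiemannInt_P19; auto; intros; unfold fct_cte; apply H; auto.
Qed.

Lemma ind_bound c d (pr : Riemann_integrable (ind c d) 0 1) : c <= d -> RiemannInt pr <= d - c.
Proof.
  intros Hcd.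
  set (c' := Rmax 0 (Rmin 1 c)). set (d' := Rmax 0 (Rmin 1 d)).
  assert (Hc' : 0 <= c' <= d' /\ d' <= 1 /\ d' - c' <= d - c).
  { unfold c', d', Rmax, Rmin.
    repeat (destruct (Rle_dec _ _)); lra. }
  assert (Hc2 : forall t, 0 < t < c' -> t < c).
  { intros t Ht. unfold c' in *. unfold Rmax, Rmin in *. repeat destruct (Rle_dec _ _); lra. }
  assert (Hd2 : forall t, d' < t < 1 -> d < t).
  { intros t Ht. unfold d' in *. unfold Rmax, Rmin in *. repeat destruct (Rle_dec _ _); lra. }
  assert (p1 := ind_int c d 0 c' ltac:(lra)).
  assert (p2 := ind_int c d c' d' ltac:(lra)).
  assert (p3 := ind_int c d d' 1 ltac:(lra)).
  assert (p12 := ind_int c d 0 d' ltac:(lra)).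
  rewrite <- (RiemannInt_P26 p12 p3 pr).
  rewrite <- (RiemannInt_P26 p1 p2 p12).
  assert (I1 : RiemannInt p1 <= 0 * (c' - 0)).
  { apply int_le_cte; [lra|]. intros t Ht. unfold ind. rewrite pdec_false; [lra|].
    specialize (Hc2 t Ht). lra. }
  assert (I2 : RiemannInt p2 <= 1 * (d' - c')).
  { apply int_le_cte; [lra|]. intros t Ht. unfold ind. destruct (pdec _); lra. }
  assert (I3 : RiemannInt p3 <= 0 * (1 - d')).
  { apply int_le_cte; [lra|]. intros t Ht. unfold ind. rewrite pdec_false; [lra|].
    specialize (Hd2 t Ht). lra. }
  lra.
Qed.

Definition IQ (Q : R -> Prop) (y : R) (t : R) : R :=
  if pdec (Q t /\ ~ Q (t - y)) then 1 else 0.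

Definition mono (Q : R -> Prop) : Prop := forall t t', Q t -> t <= t' -> Q t'.

Lemma IQ_breaks Q y : mono Q -> exists L, Breaks (fun t => Q t /\ ~ Q (t - y)) L.
Proof.
  intros Hm. destruct (Breaks_mono Q Hm) as [L HL].
  eexists. apply Breaks_and; [apply HL|]. apply Breaks_not. apply Breaks_shift. apply HL.
Qed.

Lemma IQ_int Q y a b : mono Q -> a <= b -> Riemann_integrable (IQ Q y) a b.
Proof.
  intros Hm Hab. destruct (constructive_indefinite_description _ (IQ_breaks Q y Hm)) as [L HL]. eapply Breaks_int; eauto.
Qed.

Lemma IQ_bound Q y (pr : Riemann_integrable (IQ Q y) 0 1) : mono Q -> 0 <= y -> RiemannInt pr <= y.
Proof.
  intros Hm Hy. destruct (thr Q Hm) as [H|[H|[tau [H1 H2]]]].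
  - assert (RiemannInt pr <= 0 * (1 - 0)); [|lra].
    apply int_le_cte; [lra|]. intros t _. unfold IQ. rewrite pdec_false; [lra|].
    intros [A _]; apply (H t A).
  - assert (RiemannInt pr <= 0 * (1 - 0)); [|lra].
    apply int_le_cte; [lra|]. intros t _. unfold IQ. rewrite pdec_false; [lra|].
    intros [_ A]; apply A; apply H.
  - assert (p2 := ind_int tau (tau + y) 0 1 ltac:(lra)).
    assert (RiemannInt p2 <= (tau + y) - tau) by (apply ind_bound; lra).
    assert (RiemannInt pr <= RiemannInt p2); [|lra].
    apply RiemannInt_P19; [lra|]. intros t _. unfold IQ, ind.
    destruct (pdec (Q t /\ ~ Q (t - y))) eqn:E1; [|destruct (pdec (tau <= t <= tau + y)); lra].
    unfold pdec in E1. destruct (excluded_middle_informative _) as [[A B]|]; [|discriminate].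
    rewrite pdec_true; [lra|]. split.
    + destruct (Rle_dec tau t) as [|n]; auto. exfalso; apply (H1 t (Rnot_le_lt _ _ n) A).
    + destruct (Rle_dec t (tau + y)) as [|n]; auto. apply Rnot_le_lt in n. exfalso; apply B, H2; lra.
Qed.

Section Walks.
Context {V Ed : Type} (ok : Ed -> Prop) (tl hd : Ed -> V) (len : Ed -> R).
Hypothesis len_nn : forall e, ok e -> 0 <= len e.

Lemma walk_app : forall p1 p2 u v, walk ok tl hd u (p1 ++ p2) v <->
  exists m, walk ok tl hd u p1 m /\ walk ok tl hd m p2 v.
Proof.
  induction p1 as [|e p1 IH]; intros p2 u v; simpl.
  - split; [intro H; exists u; auto | intros [m [-> H]]; auto].
  - split.
    + intros [H1 [H2 H3]]. apply IH in H3. destruct H3 as [m [A B]]. exists m; auto.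
    + intros [m [[H1 [H2 H3]] B]]. split; auto. split; auto. apply IH. exists m; auto.
Qed.

Lemma walk_len_nn : forall p u v, walk ok tl hd u p v -> 0 <= path_len len p.
Proof.
  induction p as [|e p IH]; intros u v H; simpl; [lra|].
  destruct H as [H1 [_ H3]]. specialize (len_nn e H1). specialize (IH _ _ H3). lra.
Qed.

Lemma path_len_app : forall p1 p2, path_len len (p1 ++ p2) = path_len len p1 + path_len len p2.
Proof. induction p1; intros; simpl; [lra|]. rewrite IHp1. lra. Qed.

Lemma walk_prefix : forall p u v b, walk ok tl hd u p v -> In b (u :: map hd p) ->
  exists p1 p2, p = p1 ++ p2 /\ walk ok tl hd u p1 b.
Proof.
  induction p as [|e p IH]; intros u v b H Hin.
  - destruct Hin as [<-|[]]. exists nil, nil. simpl; auto.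
  - destruct Hin as [<-|Hin].
    + exists nil, (e :: p). simpl; auto.
    + destruct H as [H1 [H2 H3]]. destruct (IH _ _ _ H3 Hin) as [p1 [p2 [-> W]]].
      exists (e :: p1), p2. simpl; auto.
Qed.

Lemma NoDup_snoc : forall (l : list V) b, NoDup l -> ~ In b l -> NoDup (l ++ [b]).
Proof.
  intros l b H Hn. apply NoDup_app; auto. constructor; [intros []|constructor].
  intros a Ha [<-|[]]; auto.
Qed.

Lemma path_extend : forall u p a e, is_path ok tl hd u p a -> ok e -> tl e = a ->
  exists p', is_path ok tl hd u p' (hd e) /\ path_len len p' <= path_len len p + len e.
Proof.
  intros u p a e [W ND] Hok Ht.
  assert (He := len_nn e Hok).
  destruct (classic (In (hd e) (u :: map hd p))) as [Hin|Hnin].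
  - destruct (walk_prefix p u a _ W Hin) as [p1 [p2 [-> W1]]].
    exists p1. split.
    + split; auto. rewrite map_app, app_comm_cons in ND. eapply NoDup_app_remove_r; eauto.
    + rewrite path_len_app. apply walk_app in W. destruct W as [m [_ W2]].
      assert (H2 := walk_len_nn _ _ _ W2). lra.
  - exists (p ++ [e]). split.
    + split.
      * apply walk_app. exists a. split; auto. simpl; auto.
      * rewrite map_app, app_comm_cons. apply NoDup_snoc; auto.
    + rewrite path_len_app. simpl. lra.
Qed.
End Walks.

Section Graph.
Variables (E : list (nat * nat)) (k : nat) (s : nat -> nat) (x : nat -> R).
Hypothesis xnn : forall e, (e < length E)%nat -> 0 <= x e.

Lemma plus_len_nn : forall f, plus_ok E k f -> 0 <= plus_len x f.
Proof. intros [e|[i j]]; simpl; intros; [apply xnn; auto| lra]. Qed.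

Lemma ball_mono v u : mono (fun t => in_ball E k s x v t u).
Proof. intros t t' [p [H1 H2]] Ht. exists p; split; auto; lra. Qed.

Lemma ball_ext v a e t : (e < length E)%nat -> etail E e = a ->
  in_ball E k s x v t (inl a) -> in_ball E k s x v (t + x e) (inl (ehead E e)).
Proof.
  intros He Ht [p [P L]].
  destruct (path_extend (plus_ok E k) (plus_tl E) (plus_hd E s) (plus_len x) plus_len_nn
              v p (inl a) (inl e) P He ltac:(simpl; congruence)) as [p' [P' L']].
  exists p'. split; auto. simpl in L'. lra.
Qed.

Lemma hd_inl : forall p i, ~ In (inr i) (map (plus_hd E s) p).
Proof.
  intros p i Hin. apply in_map_iff in Hin. destruct Hin as [[e|[a b]] [H _]]; discriminate.
Qed.

Lemma ball_iff i a t : (i < k)%nat ->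
  (in_ball E k s x (inr i) t (inl a) <->
   exists j, (j < k)%nat /\ j <> i /\ in_ball E k s x (inl (s j)) t (inl a)).
Proof.
  intros Hi. split.
  - intros [[|f p] [[W ND] L]]; [simpl in W; discriminate|].
    destruct W as [Hok [Htl W]].
    destruct f as [e|[i' j]]; simpl in Htl; [discriminate|]. injection Htl as ->.
    destruct Hok as [_ [Hj Hij]].
    exists j. split; auto. split; auto. exists p. split.
    + split; [exact W|]. simpl in ND. inversion ND; auto.
    + simpl in L. lra.
  - intros [j [Hj [Hji [p [[W ND] L]]]]].
    exists (inr (i, j) :: p). split.
    + split.
      * simpl. split; [split; auto; split; auto|]. split; auto.
      * simpl. constructor; auto. intros [H|H]; [discriminate|]. apply (hd_inl p i H).
    + simpl. lra.
Qed.
End Graph.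

Section Edge.
Variables (E : list (nat * nat)) (k : nat) (s : nat -> nat) (w x : nat -> R).
Hypothesis xnn : forall e, (e < length E)%nat -> 0 <= x e.
Hypothesis wnn : forall e, (e < length E)%nat -> 0 <= w e.

Definition Fe (e : nat) (t : R) : R := if pdec (in_cut E k s x t (inl e)) then w e else 0.

Lemma Fe_breaks e : exists L, Breaks (fun t => in_cut E k s x t (inl e)) L.
Proof.
  unfold in_cut. apply Breaks_exists. intros i Hi.
  unfold in_delta_out.
  destruct (Breaks_mono _ (ball_mono E k s x (inr i) (plus_tl E (inl e)))) as [L1 H1].
  destruct (Breaks_mono _ (ball_mono E k s x (inr i) (plus_hd E s (inl e)))) as [L2 H2].
  exists (nil ++ (L1 ++ L2)).
  apply (Breaks_and (fun _ => plus_ok E k (inl e))). { apply Breaks_const. }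
  apply Breaks_and; auto. apply Breaks_not; auto.
Qed.

Lemma Fe_int e : Riemann_integrable (Fe e) 0 1.
Proof.
  destruct (constructive_indefinite_description _ (Fe_breaks e)) as [L HL].
  unfold Fe. eapply Breaks_int; eauto. lra.
Qed.

Definition Pa (a j : nat) (t : R) := in_ball E k s x (inl (s j)) t (inl a).
Definition UU a t := exists j, (j < k)%nat /\ Pa a j t.
Definition WW a t := exists j1, (j1 < k)%nat /\ exists j2, (j2 < k)%nat /\ j1 <> j2 /\ Pa a j1 t /\ Pa a j2 t.

Lemma UU_mono a : mono (UU a).
Proof. intros t t' [j [Hj H]] Ht. exists j; split; auto. eapply ball_mono; eauto. Qed.
Lemma WW_mono a : mono (WW a).
Proof.
  intros t t' [j1 [H1 [j2 [H2 [Hn [A B]]]]]] Ht. exists j1; split; auto. exists j2.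
  repeat split; auto; eapply ball_mono; eauto.
Qed.

Lemma key e t : (e < length E)%nat -> in_cut E k s x t (inl e) ->
  (UU (etail E e) t /\ ~ UU (etail E e) (t - x e)) \/
  (WW (etail E e) t /\ ~ WW (etail E e) (t - x e)).
Proof.
  intros He [i [Hi [_ [Ba Bb]]]]. simpl in Ba, Bb.
  set (a := etail E e) in *.
  assert (NB : ~ in_ball E k s x (inr i) (t - x e) (inl a)).
  { intro H. apply Bb. replace t with (t - x e + x e) by lra.
    apply (ball_ext E k s x xnn _ a); auto. }
  rewrite (ball_iff E k s x) in Ba, NB; auto.
  destruct Ba as [j [Hj [Hji Pj]]].
  destruct (classic (UU a (t - x e))) as [[j0 [Hj0 P0]]|HU].
  - right. assert (j0 = i).
    { destruct (Nat.eq_dec j0 i); auto. exfalso; apply NB. exists j0; auto. }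
    subst j0. split.
    + exists j; split; auto. exists i; split; auto. split; auto. split; auto.
      eapply ball_mono; [exact P0|]. specialize (xnn e He). lra.
    + intros [j1 [H1 [j2 [H2 [Hn [A B]]]]]]. apply NB.
      destruct (Nat.eq_dec j1 i) as [->|Hn1].
      * exists j2; auto.
      * exists j1; auto.
  - left. split; auto. exists j; auto.
Qed.

Lemma IQ_nn Q y t : 0 <= IQ Q y t.
Proof. unfold IQ; destruct (pdec _); lra. Qed.
Lemma IQ_le1 Q y t : IQ Q y t <= 1.
Proof. unfold IQ; destruct (pdec _); lra. Qed.

Lemma Fe_bound e (pr : Riemann_integrable (Fe e) 0 1) : (e < length E)%nat ->
  RiemannInt pr <= 2 * (w e * x e).
Proof.
  intros He. set (a := etail E e). set (y := x e).
  assert (Hy : 0 <= y) by (apply xnn; auto). assert (Hw := wnn e He).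
  assert (pU := IQ_int (UU a) y 0 1 (UU_mono a) ltac:(lra)).
  assert (pW := IQ_int (WW a) y 0 1 (WW_mono a) ltac:(lra)).
  assert (p0 := RiemannInt_P14 0 1 0).
  assert (p1 := RiemannInt_P10 (w e) p0 pU).
  assert (p2 := RiemannInt_P10 (w e) p1 pW).
  assert (E1 := RiemannInt_P13 p0 pU p1).
  assert (E2 := RiemannInt_P13 p1 pW p2).
  rewrite (RiemannInt_P15 p0) in E1.
  assert (BU := IQ_bound (UU a) y pU (UU_mono a) Hy).
  assert (BW := IQ_bound (WW a) y pW (WW_mono a) Hy).
  assert (RiemannInt pr <= RiemannInt p2).
  { apply RiemannInt_P19; [lra|]. intros t _. unfold Fe, fct_cte.
    assert (N1 := IQ_nn (UU a) y t). assert (N2 := IQ_nn (WW a) y t).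
    destruct (pdec (in_cut E k s x t (inl e))) eqn:Ec.
    - unfold pdec in Ec. destruct (excluded_middle_informative _) as [C|]; [|discriminate].
      destruct (key e t He C) as [K|K].
      + unfold IQ at 1. rewrite pdec_true; auto. nra.
      + unfold IQ at 2. rewrite pdec_true; auto. nra.
    - nra. }
  assert (w e * RiemannInt pU <= w e * y) by (apply Rmult_le_compat_l; auto).
  assert (w e * RiemannInt pW <= w e * y) by (apply Rmult_le_compat_l; auto).
  unfold y in *. lra.
Qed.

Lemma sum_bound : forall l, (forall e, In e l -> (e < length E)%nat) ->
  exists pr : Riemann_integrable (fun t => fold_right Rplus 0 (map (fun e => Fe e t) l)) 0 1,
    RiemannInt pr <= 2 * fold_right Rplus 0 (map (fun e => w e * x e) l).
Proof.
  induction l as [|e l IH]; intros Hl.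
  - exists (RiemannInt_P14 0 1 0). change (RiemannInt (RiemannInt_P14 0 1 0) <= 2 * 0). rewrite RiemannInt_P15. lra.
  - destruct IH as [pr IHb]. { intros; apply Hl; simpl; auto. }
    assert (pe := Fe_int e).
    assert (p := RiemannInt_P10 1 pe pr).
    assert (Eq := RiemannInt_P13 pe pr p).
    assert (pr' : Riemann_integrable (fun t => fold_right Rplus 0 (map (fun e => Fe e t) (e :: l))) 0 1).
    { eapply Riemann_integrable_ext; [|exact p]. intros; simpl; lra. }
    exists pr'.
    assert (RiemannInt pr' = RiemannInt p).
    { apply RiemannInt_P18; [lra|]. intros; simpl; lra. }
    assert (B := Fe_bound e pe ltac:(apply Hl; simpl; auto)).
    assert (R1 : fold_right Rplus 0 (map (fun e => w e * x e) (e :: l)) = w e * x e + fold_right Rplus 0 (map (fun e => w e * x e) l)) by reflexivity.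
    rewrite R1, H, Eq. lra.
Qed.
End Edge.

Theorem mainTheorem4
  (nV : nat) (E : list (nat * nat)) (k : nat) (s : nat -> nat) (w x : nat -> R)
  (hE : forall e, (e < length E)%nat -> (etail E e < nV)%nat /\ (ehead E e < nV)%nat)
  (hw : forall e, (e < length E)%nat -> 0 <= w e)
  (hk : (2 <= k)%nat)
  (hs : forall i, (i < k)%nat -> (s i < nV)%nat)
  (hsd : forall i j, (i < k)%nat -> (j < k)%nat -> s i = s j -> i = j)
  (hx : feasible E k s x) :
  exists pr : Riemann_integrable (cut_weight E k s w x) 0 1,
    RiemannInt pr <= 2 * lp_value E w x.
Proof.
  destruct hx as [xnn _].
  destruct (sum_bound E k s w x xnn hw (seq 0 (length E))) as [pr H].
  { intros e He. apply in_seq in He. lia. }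
  exists pr. exact H.
Qed.
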